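(* Let $a\in\mathbb C$ and let $\mathfrak g=\mathcal W(a,1)$ be the Lie algebra with basis $\{L_i,H_i: i\in\mathbb Z\}$ and brackets $[L_i,L_j]=(j-i)L_{i+j}$, $[L_i,H_j]=(a+j+i)H_{i+j}$, $[H_i,H_j]=0$. Let $\mathfrak p=\mathrm{Span}\{H_i: i\in\mathbb Z\}$ and let $\phi:\mathfrak p\to\mathbb C$ be a nonzero linear map which is upper finite (resp. lower finite), and let $j_0$ be the maximal (resp. minimal) element of $S^\phi=\{j\in\mathbb Z:\phi(H_j)\neq0\}$. Then $W(\phi)$ is reducible if and only if $S^\phi=\{j_0\}$ and $a=-j_0$.
   Context: Since $\mathfrak p$ is abelian, every linear map $\phi:\mathfrak p\to\mathbb C$ is a Lie algebra homomorphism. $\phi$ is upper (resp. lower) finite if there exists $j_1\in\mathbb Z$ with $\phi(H_j)=0$ for all $j>j_1$ (resp. $j<j_1$). $W(\phi)=\mathcal U(\mathfrak g)\otimes_{\mathcal U(\mathfrak p)}\mathbb C w_\phi$, where $\mathbb C w_\phi$ is the one-dimensional $\mathfrak p$-module with $pw_\phi=\phi(p)w_\phi$. *)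

(* Defs.v *)
From HB Require Import structures.
From mathcomp Require Import all_boot all_order all_algebra.
From mathcomp Require Import reals.
From mathcomp Require Import complex.
Set Implicit Arguments. Unset Strict Implicit. Unset Printing Implicit Defensive.
Import Order.TTheory GRing.Theory Num.Theory.
Local Open Scope ring_scope.

Definition Cx (R : realType) := (R[i])%C.

(* A module over g = W(a,1): a C-vector space V with linear operators
   rhoL i, rhoH i (the actions of the basis vectors L_i, H_i) satisfying
   [L_i,L_j] = (j-i) L_{i+j}, [L_i,H_j] = (a+j+i) H_{i+j}, [H_i,H_j] = 0.
   (A linear action of g is determined by the action of the basis.) *)
Definition is_Wmodule (R : realType) (a : Cx R) (V : lmodType (Cx R))
    (rhoL rhoH : int -> V -> V) : Prop :=
  [/\ (forall i, linear (rhoL i)), (forall i, linear (rhoH i)),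
      (forall i j v, rhoL i (rhoL j v) - rhoL j (rhoL i v)
                       = (j - i)%:~R *: rhoL (i + j) v),
      (forall i j v, rhoL i (rhoH j v) - rhoH j (rhoL i v)
                       = (a + (j + i)%:~R) *: rhoH (i + j) v) &
      (forall i j v, rhoH i (rhoH j v) = rhoH j (rhoH i v))].

(* A linear functional phi : p -> C on p = Span{H_i} is given by its values
   phi(H_j); we represent it by the function j |-> phi(H_j). *)
Definition Sphi (R : realType) (phi : int -> Cx R) (j : int) : Prop := phi j != 0.

Definition upper_finite (R : realType) (phi : int -> Cx R) : Prop :=
  exists j1 : int, forall j, j1 < j -> phi j = 0.
Definition lower_finite (R : realType) (phi : int -> Cx R) : Prop :=
  exists j1 : int, forall j, j < j1 -> phi j = 0.

(* W(phi) = U(g) (x)_{U(p)} C w_phi, characterised up to isomorphism by its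
   universal property (induced module): (V, w) is a g-module with
   H_j w = phi(H_j) w such that for every g-module M and m in M with
   H_j m = phi(H_j) m there is a unique g-module map f : V -> M with f w = m. *)
Definition is_Wphi (R : realType) (a : Cx R) (phi : int -> Cx R)
    (V : lmodType (Cx R)) (rhoL rhoH : int -> V -> V) (w : V) : Prop :=
  [/\ is_Wmodule a rhoL rhoH,
      (forall j, rhoH j w = phi j *: w) &
      (forall (M : lmodType (Cx R)) (mL mH : int -> M -> M) (m : M),
          is_Wmodule a mL mH -> (forall j, mH j m = phi j *: m) ->
          exists f : V -> M,
            [/\ linear f, f w = m,
                (forall i v, f (rhoL i v) = mL i (f v)),
                (forall i v, f (rhoH i v) = mH i (f v)) &
                (forall g : V -> M, linear g -> g w = m ->
                   (forall i v, g (rhoL i v) = mL i (g v)) ->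
                   (forall i v, g (rhoH i v) = mH i (g v)) ->
                   forall v, g v = f v)])].

Definition is_submodule (R : realType) (V : lmodType (Cx R))
    (rhoL rhoH : int -> V -> V) (S : V -> Prop) : Prop :=
  [/\ S 0, (forall u v, S u -> S v -> S (u + v)),
      (forall (c : Cx R) v, S v -> S (c *: v)),
      (forall i v, S v -> S (rhoL i v)) & (forall i v, S v -> S (rhoH i v))].

Definition reducible (R : realType) (V : lmodType (Cx R))
    (rhoL rhoH : int -> V -> V) : Prop :=
  exists S : V -> Prop, [/\ is_submodule rhoL rhoH S,
                            (exists v, S v /\ v <> 0) & (exists v, ~ S v)].

(* Main.v *)
Require Import Defs.
From HB Require Import structures.
From mathcomp Require Import all_boot all_order all_algebra.
From mathcomp Require Import reals.
From mathcomp Require Import complex.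
From mathcomp Require Import boolp classical_sets functions.
From mathcomp Require Import ring zify.
Import Order.TTheory GRing.Theory Num.Theory.
Local Open Scope ring_scope.
Set Implicit Arguments. Unset Strict Implicit. Unset Printing Implicit Defensive.

Section Lin.
Variables (K : pzRingType) (V W : lmodType K) (f : V -> W).
Hypothesis lf : linear f.
Lemma lin0 : f 0 = 0.
Proof. have h := lf 1 0 0; rewrite !scale1r addr0 in h. by apply: (addrI (f 0)); rewrite addr0 -h. Qed.
Lemma linD u v : f (u + v) = f u + f v.
Proof. by have := lf 1 u v; rewrite !scale1r. Qed.
Lemma linZ c u : f (c *: u) = c *: f u.
Proof. by have := lf c u 0; rewrite !addr0 lin0 addr0. Qed.
Lemma linN u : f (- u) = - f u.
Proof. by rewrite -scaleN1r linZ scaleN1r. Qed.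
Lemma linB u v : f (u - v) = f u - f v.
Proof. by rewrite linD linN. Qed.
Lemma linS (I : Type) (r : seq I) (P : pred I) (F : I -> V) :
  f (\sum_(i <- r | P i) F i) = \sum_(i <- r | P i) f (F i).
Proof. exact: (big_morph f linD lin0). Qed.
End Lin.

Record subm (K : pzRingType) (V : lmodType K) := Subm {
  sT : V -> Prop;
  sT0 : sT 0;
  sTD : forall u v, sT u -> sT v -> sT (u + v);
  sTZ : forall c v, sT v -> sT (c *: v) }.

Section Quot.
Variables (K : pzRingType) (V : lmodType K) (s : subm V).
Local Notation T := (sT s).
Let T0 : T 0. Proof. exact: sT0. Qed.
Let TD u v : T u -> T v -> T (u + v). Proof. exact: sTD. Qed.
Let TZ c v : T v -> T (c *: v). Proof. exact: sTZ. Qed.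

Lemma TN v : T v -> T (- v). Proof. by move=> h; rewrite -scaleN1r; apply: TZ. Qed.
Lemma TB u v : T u -> T v -> T (u - v). Proof. by move=> hu hv; apply: TD => //; apply: TN. Qed.

Definition qcl (x : V) : set V := fun y => T (x - y).
Definition canon x := xget 0 (qcl x).
Lemma canonP x : T (x - canon x).
Proof. by apply: (@xgetPex _ 0 (qcl x)); exists x; rewrite /qcl subrr. Qed.
Lemma canon_eq x y : T (x - y) -> canon x = canon y.
Proof.
move=> h; rewrite /canon; congr xget; apply/funext => z; apply/propext; rewrite /qcl; split => hz.
  by have := TB hz h; rewrite opprB addrC addrA subrK.
by have := TD h hz; rewrite addrA subrK.
Qed.
Lemma canonT x y : canon x = canon y -> T (x - y).
Proof.
move=> e; have := TB (canonP x) (canonP y); rewrite e.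
by rewrite opprB addrA subrK.
Qed.
Lemma canon_id x : canon (canon x) = canon x.
Proof. by apply: canon_eq; rewrite -opprB; apply: TN; apply: canonP. Qed.

Definition Q := {x : V | canon x == x}.
HB.instance Definition _ := Choice.on Q.
Definition pi (x : V) : Q := exist _ (canon x) (introT eqP (canon_id x)).
Definition rep (q : Q) (u : V) := T (sval q - u).

Lemma rep_pi u : rep (pi u) u.
Proof. by rewrite /rep /= -opprB; apply: TN; apply: canonP. Qed.
Lemma pi_val q : pi (sval q) = q.
Proof. by case: q => x hx; apply: val_inj => /=; apply/eqP. Qed.
Lemma diff3 x y z : x - y = (z - y) - (z - x) :> V.
Proof. by rewrite opprB (addrC (z - y)) addrA subrK. Qed.
Lemma rep_eq q q' u u' : rep q u -> rep q' u' -> T (u - u') -> q = q'.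
Proof.
move=> h h' e; rewrite -(pi_val q) -(pi_val q'); apply: val_inj => /=.
apply: canon_eq.
have -> : sval q - sval q' = ((sval q - u) + (u - u')) - (sval q' - u').
  by rewrite addrA subrK opprB addrA subrK.
by apply: TB => //; apply: TD.
Qed.
Lemma rep_eq' q q' u : rep q u -> rep q' u -> q = q'.
Proof. by move=> h h'; apply: rep_eq h h' _; rewrite subrr. Qed.

Definition qzero := pi 0.
Definition qadd (p q : Q) := pi (sval p + sval q).
Definition qopp (q : Q) := pi (- sval q).
Definition qscale (c : K) (q : Q) := pi (c *: sval q).

Lemma rep_val q : rep q (sval q). Proof. by rewrite /rep subrr. Qed.
Lemma rep0 : rep qzero 0. Proof. exact: rep_pi. Qed.
Lemma repF (f : V -> V) q u : (forall x, T x -> T (f x)) -> (forall x y, f (x - y) = f x - f y) ->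
  rep q u -> rep (pi (f (sval q))) (f u).
Proof.
move=> fT fB h; rewrite /rep /= (diff3 _ _ (f (sval q))).
by apply: TB; [rewrite -fB; apply: fT | apply: canonP].
Qed.
Lemma repD p q u v : rep p u -> rep q v -> rep (qadd p q) (u + v).
Proof.
move=> hu hv; rewrite /rep /qadd /= (diff3 _ _ (sval p + sval q)).
apply: TB; last by apply: canonP.
have -> : sval p + sval q - (u + v) = (sval p - u) + (sval q - v).
  by rewrite addrACA -opprD.
by apply: TD.
Qed.
Lemma repN q u : rep q u -> rep (qopp q) (- u).
Proof. apply: repF; [exact: TN | by move=> x y; rewrite opprB addrC opprK]. Qed.
Lemma repZ c q u : rep q u -> rep (qscale c q) (c *: u).
Proof. apply: repF; [exact: TZ | by move=> x y; rewrite scalerBr]. Qed.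

Lemma qaddA : associative qadd.
Proof.
move=> x y z; apply: rep_eq' (repD (rep_val x) (repD (rep_val y) (rep_val z))) _.
by rewrite addrA; apply: repD (repD (rep_val x) (rep_val y)) (rep_val z).
Qed.
Lemma qaddC : commutative qadd.
Proof. by move=> x y; apply: rep_eq' (repD (rep_val x) (rep_val y)) _; rewrite addrC; apply: repD; apply: rep_val. Qed.
Lemma qadd0 : left_id qzero qadd.
Proof. by move=> x; apply: rep_eq' (repD rep0 (rep_val x)) _; rewrite add0r; apply: rep_val. Qed.
Lemma qaddN : left_inverse qzero qopp qadd.
Proof. by move=> x; apply: rep_eq' (repD (repN (rep_val x)) (rep_val x)) _; rewrite addNr; apply: rep0. Qed.

HB.instance Definition _ := GRing.isZmodule.Build Q qaddA qaddC qadd0 qaddN.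

Lemma qscaleA a b v : qscale a (qscale b v) = qscale (a * b) v.
Proof. by apply: rep_eq' (repZ a (repZ b (rep_val v))) _; rewrite scalerA; apply: repZ; apply: rep_val. Qed.
Lemma qscale1 : left_id 1 qscale.
Proof. by move=> x; apply: rep_eq' (repZ 1 (rep_val x)) _; rewrite scale1r; apply: rep_val. Qed.
Lemma qscaleDr : right_distributive qscale +%R.
Proof.
move=> c x y; apply: rep_eq' (repZ c (repD (rep_val x) (rep_val y))) _.
by rewrite scalerDr; apply: repD; apply: repZ; apply: rep_val.
Qed.
Lemma qscaleDl v : {morph qscale^~ v: a b / a + b}.
Proof.
move=> c d; apply: rep_eq' (repZ (c + d) (rep_val v)) _.
by rewrite scalerDl; apply: repD; apply: repZ; apply: rep_val.
Qed.
HB.instance Definition _ := GRing.Zmodule_isLmodule.Build K Q qscaleA qscale1 qscaleDr qscaleDl.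

Lemma repD' (p q : Q) u v : rep p u -> rep q v -> rep (p + q) (u + v). Proof. exact: repD. Qed.
Lemma repZ' c (q : Q) u : rep q u -> rep (c *: q) (c *: u). Proof. exact: repZ. Qed.
Lemma repN' (q : Q) u : rep q u -> rep (- q) (- u). Proof. exact: repN. Qed.
Lemma rep0' : rep (0 : Q) 0. Proof. exact: rep0. Qed.
End Quot.

Section W.
Variable R : realType.
Local Notation K := (Cx R).
Variables (a : K) (phi : int -> K) (V : lmodType K) (rhoL rhoH : int -> V -> V) (w : V).
Hypothesis HM : is_Wmodule a rhoL rhoH.
Hypothesis Hw : forall j, rhoH j w = phi j *: w.

Let linL i : linear (rhoL i). Proof. by case: HM. Qed.
Let linH i : linear (rhoH i). Proof. by case: HM. Qed.
Let cLL i j v : rhoL i (rhoL j v) - rhoL j (rhoL i v) = (j - i)%:~R *: rhoL (i + j) v.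
Proof. by case: HM. Qed.
Let cLH i j v : rhoL i (rhoH j v) - rhoH j (rhoL i v) = (a + (j + i)%:~R) *: rhoH (i + j) v.
Proof. by case: HM. Qed.

Definition Lw (s : seq int) : V := foldr rhoL w s.
Definition ev (l : seq (K * seq int)) : V := \sum_(x <- l) x.1 *: Lw x.2.
Definition U (n : nat) (v : V) : Prop :=
  exists l : seq (K * seq int), (forall x, x \in l -> (size x.2 <= n)%N) /\ v = ev l.
Definition Ul (n : nat) (v : V) : Prop := if n is n'.+1 then U n' v else v = 0.

Lemma ev_cat l1 l2 : ev (l1 ++ l2) = ev l1 + ev l2.
Proof. by rewrite /ev big_cat. Qed.

Lemma U0 n : U n 0.
Proof. by exists [::]; split => //; rewrite /ev big_nil. Qed.
Lemma UD n u v : U n u -> U n v -> U n (u + v).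
Proof.
move=> [l1 [H1 ->]] [l2 [H2 ->]]; exists (l1 ++ l2); split; last by rewrite ev_cat.
by move=> x; rewrite mem_cat => /orP [/H1|/H2].
Qed.
Lemma UZ n c v : U n v -> U n (c *: v).
Proof.
move=> [l [H ->]]; exists [seq (c * x.1, x.2) | x <- l]; split.
  by move=> x /mapP [y /H hy ->].
by rewrite /ev big_map scaler_sumr; apply: eq_bigr => x _; rewrite scalerA.
Qed.
Lemma UN n v : U n v -> U n (- v).
Proof. by move=> h; rewrite -scaleN1r; apply: UZ. Qed.
Lemma UB n u v : U n u -> U n v -> U n (u - v).
Proof. by move=> hu hv; apply: UD => //; apply: UN. Qed.
Lemma Umon n m v : (n <= m)%N -> U n v -> U m v.
Proof. by move=> nm [l [H ->]]; exists l; split => // x /H h; apply: leq_trans nm. Qed.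
Lemma ULw n s : (size s <= n)%N -> U n (Lw s).
Proof.
move=> hs; exists [:: (1, s)]; split; first by move=> x; rewrite inE => /eqP ->.
by rewrite /ev big_cons big_nil scale1r addr0.
Qed.
Lemma UL n i v : U n v -> U n.+1 (rhoL i v).
Proof.
move=> [l [H ->]]; exists [seq (x.1, i :: x.2) | x <- l]; split.
  by move=> x /mapP [y /H hy ->].
rewrite /ev big_map linS //; apply: eq_bigr => x _; by rewrite linZ.
Qed.

Lemma Ul0 n : Ul n 0.
Proof. by case: n => [|n] //=; apply: U0. Qed.
Lemma UlD n u v : Ul n u -> Ul n (u + v) \/ True -> Ul n v -> Ul n (u + v).
Proof. by case: n => [|n] /= hu _ hv; [rewrite hu hv addr0 | apply: UD]. Qed.
Lemma UlD' n u v : Ul n u -> Ul n v -> Ul n (u + v).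
Proof. by move=> hu hv; apply: UlD => //; right. Qed.
Lemma UlZ n c v : Ul n v -> Ul n (c *: v).
Proof. by case: n => [|n] /= h; [rewrite h scaler0 | apply: UZ]. Qed.
Lemma UlN n v : Ul n v -> Ul n (- v).
Proof. by move=> h; rewrite -scaleN1r; apply: UlZ. Qed.
Lemma UlB n u v : Ul n u -> Ul n v -> Ul n (u - v).
Proof. by move=> hu hv; apply: UlD' => //; apply: UlN. Qed.
Lemma UlL n i v : Ul n v -> Ul n.+1 (rhoL i v).
Proof. by case: n => [|n] /= h; [rewrite h lin0 //; apply: U0 | apply: UL]. Qed.
Lemma U_Ul n v : U n v -> Ul n.+1 v.
Proof. by []. Qed.

Lemma LwS i s : Lw (i :: s) = rhoL i (Lw s).
Proof. by []. Qed.

Lemma swap_lemma t1 t2 i :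
  U (size t1 + size t2) (Lw (i :: t1 ++ t2) - Lw (t1 ++ i :: t2)).
Proof.
elim: t1 => [|x t1 IH]; first by rewrite /= subrr; apply: U0.
rewrite cat_cons !LwS.
set y := Lw (t1 ++ t2).
have -> : rhoL i (rhoL x y) - rhoL x (Lw (t1 ++ i :: t2)) =
   (rhoL i (rhoL x y) - rhoL x (rhoL i y)) + rhoL x (Lw (i :: t1 ++ t2) - Lw (t1 ++ i :: t2)).
  by rewrite (linB (linL x)) LwS addrA subrK.
apply: UD; last by apply: UL.
rewrite cLL; apply: UZ; apply: (ULw (s := (i + x) :: (t1 ++ t2))).
by rewrite /= size_cat.
Qed.

Lemma perm_lemma s t : perm_eq s t -> Ul (size s) (Lw s - Lw t).
Proof.
elim: s t => [|i s IH] t.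
  by move=> /perm_size; case: t => // _; rewrite subrr.
move=> hp; have hi : i \in t by rewrite -(perm_mem hp) mem_head.
move: hp; case/splitPr: hi => t1 t2 hp.
have e : perm_eq (t1 ++ i :: t2) (i :: t1 ++ t2).
  by rewrite -cat1s (perm_catCA t1 [:: i] t2) perm_refl.
move: (perm_trans hp e); rewrite perm_cons => {}hp.
have -> : Lw (i :: s) - Lw (t1 ++ i :: t2) =
   rhoL i (Lw s - Lw (t1 ++ t2)) + (Lw (i :: t1 ++ t2) - Lw (t1 ++ i :: t2)).
  by rewrite (linB (linL i)) LwS addrA subrK.
apply: UlD'; first by apply: UlL; apply: IH.
rewrite /= (perm_size hp) size_cat; exact: swap_lemma.
Qed.

Definition gam j i := - (a + (j + i)%:~R) * phi (i + j).
Fixpoint drv (g : int -> K) (s : seq int) : seq (K * seq int) :=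
  if s is i :: s' then (g i, s') :: [seq (x.1, i :: x.2) | x <- drv g s'] else [::].
Definition E j v := rhoH j v - phi j *: v.

Lemma linE j : linear (E j).
Proof.
move=> c u v; rewrite /E (linD (linH j)) (linZ (linH j)).
rewrite scalerDr scalerBr !scalerA mulrC.
by rewrite opprD addrACA.
Qed.

Lemma ev_drv g i s : ev (drv g (i :: s)) = g i *: Lw s + rhoL i (ev (drv g s)).
Proof.
rewrite /ev /= big_cons big_map (linS (linL i)); congr (_ + _).
by apply: eq_bigr => x _; rewrite (linZ (linL i)).
Qed.

Lemma size_drv g s x : x \in drv g s -> size x.2 = (size s).-1.
Proof.
elim: s x => [|i s IH] x //=; rewrite inE => /orP [/eqP -> //|/mapP [y hy ->]] /=.
rewrite (IH _ hy); case: s IH hy => //.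
Qed.

Lemma Ul_U n v : Ul n v -> U n v.
Proof. by case: n => [|n] /= h; [rewrite h; apply: U0 | apply: Umon h]. Qed.

Lemma U_ev n l : (forall x, x \in l -> (size x.2 <= n)%N) -> U n (ev l).
Proof. by move=> h; exists l. Qed.

Lemma zid (M : zmodType) (x b d e : M) : x - (b - d) - (d + e) = x - e - b.
Proof. by rewrite opprB opprD !addrA (addrAC x) addrK addrAC. Qed.

Lemma E_Lw s : forall j, Ul (size s).-1 (E j (Lw s) - ev (drv (gam j) s)).
Proof.
elim: s => [|i s IH] j.
  by rewrite /= /E Hw subrr /ev big_nil subrr.
set y := Lw s; set c := a + (j + i)%:~R.
have h' : rhoH j (rhoL i y) = rhoL i (rhoH j y) - c *: rhoH (i + j) y.
  by rewrite -(cLH i j y) opprB addrC subrK.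
have e1 : E j (rhoL i y) = rhoL i (E j y) - c *: rhoH (i + j) y.
  by rewrite /E h' (linB (linL i)) (linZ (linL i)) addrAC.
have e2 : c *: rhoH (i + j) y = c *: E (i + j) y - gam j i *: y.
  rewrite /E /gam scalerBr scalerA mulNr scaleNr opprK.
  by rewrite subrK.
have key : E j (Lw (i :: s)) - ev (drv (gam j) (i :: s)) =
    rhoL i (E j y - ev (drv (gam j) s)) - c *: E (i + j) y.
  by rewrite ev_drv -/y LwS e1 e2 (linB (linL i) (E j y)) zid.
rewrite key /=; clear h' e1 e2 key.
case: s IH @y => [|k s] IH y.
  have := IH j; rewrite /= => ->; rewrite (lin0 (linL i)) sub0r /y /= /E Hw subrr scaler0 oppr0.
  by [].
apply: UB; first by apply: (UlL (n := (size s))); apply: IH.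
have -> : E (i + j) y = (E (i + j) y - ev (drv (gam (i + j)) (k :: s))) + ev (drv (gam (i + j)) (k :: s)).
  by rewrite subrK.
apply: UZ; apply: UD; first by apply: Ul_U; apply: IH.
by apply: U_ev => x /size_drv ->.
Qed.

Lemma UlS n (I : eqType) (r : seq I) (F : I -> V) :
  (forall x, x \in r -> Ul n (F x)) -> Ul n (\sum_(x <- r) F x).
Proof.
elim: r => [|y r IH] h; first by rewrite big_nil; apply: Ul0.
rewrite big_cons; apply: UlD'; first by apply: h; rewrite mem_head.
by apply: IH => x hx; apply: h; rewrite inE hx orbT.
Qed.
Lemma US n (I : eqType) (r : seq I) (F : I -> V) :
  (forall x, x \in r -> U n (F x)) -> U n (\sum_(x <- r) F x).
Proof.
elim: r => [|y r IH] h; first by rewrite big_nil; apply: U0.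
rewrite big_cons; apply: UD; first by apply: h; rewrite mem_head.
by apply: IH => x hx; apply: h; rewrite inE hx orbT.
Qed.

Lemma E_Lw_Ul j t n : (size t <= n)%N -> Ul n (E j (Lw t)).
Proof.
case: t => [|i t] hs; first by rewrite /E /= Hw subrr; apply: Ul0.
case: n hs => [//|n] hs /=.
have -> : E j (Lw (i :: t)) = (E j (Lw (i :: t)) - ev (drv (gam j) (i :: t))) + ev (drv (gam j) (i :: t)).
  by rewrite subrK.
apply: (@Umon (size t)); first by [].
apply: UD; first by apply: Ul_U; apply: E_Lw.
by apply: U_ev => x /size_drv ->.
Qed.

Lemma E_U j n v : U n v -> Ul n (E j v).
Proof.
move=> [l [H ->]]; rewrite /ev (linS (linE j)); apply: UlS => x hx.
by rewrite (linZ (linE j)); apply: UlZ; apply: E_Lw_Ul; apply: H.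
Qed.

Lemma U_H j n v : U n v -> U n (rhoH j v).
Proof.
move=> h; have -> : rhoH j v = E j v + phi j *: v by rewrite /E subrK.
by apply: UD; [apply: Ul_U; apply: E_U | apply: UZ].
Qed.

Definition Dl (g : int -> K) (l : seq (K * seq int)) : seq (K * seq int) :=
  flatten [seq [seq (x.1 * y.1, y.2) | y <- drv g x.2] | x <- l].

Lemma ev_Dl g l : ev (Dl g l) = \sum_(x <- l) x.1 *: ev (drv g x.2).
Proof.
rewrite /ev /Dl big_flatten big_map; apply: eq_bigr => x _.
by rewrite big_map scaler_sumr; apply: eq_bigr => y _; rewrite scalerA.
Qed.

Lemma size_Dl g l k x : (forall y, y \in l -> size y.2 = k) -> x \in Dl g l -> size x.2 = k.-1.
Proof.
move=> h /flattenP [s /mapP [y hy ->] /mapP [z hz ->]] /=.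
by rewrite (size_drv hz) (h _ hy).
Qed.

Lemma E_ev_Dl j l k : (forall y, y \in l -> size y.2 = k) ->
  Ul k.-1 (E j (ev l) - ev (Dl (gam j) l)).
Proof.
move=> h; rewrite ev_Dl /ev (linS (linE j)) -sumrB; apply: UlS => x hx.
rewrite (linZ (linE j)) -scalerBr; apply: UlZ.
by have := E_Lw (x.2) j; rewrite (h _ hx).
Qed.

Definition srt (s : seq int) := sort (fun x y : int => x <= y) s.
Lemma srt_perm s : perm_eq (srt s) s.
Proof. by rewrite /srt perm_sort perm_refl. Qed.
Lemma srtP s t : reflect (srt s = srt t) (perm_eq s t).
Proof. exact: (perm_sortP le_total le_trans le_anti). Qed.
Lemma srt_id s : srt (srt s) = srt s.
Proof. by apply/srtP; apply: srt_perm. Qed.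

Lemma sum_pred1_seq (T : eqType) (M : nmodType) (r : seq T) y (F : T -> M) :
  uniq r -> y \in r -> \sum_(t <- r) (if y == t then F t else 0) = F y.
Proof.
move=> ur yr; rewrite (bigD1_seq y) //= eqxx big1 ?addr0 // => t.
by rewrite eq_sym => /negbTE ->.
Qed.

Definition sym (l : seq (K * seq int)) (t : seq int) : K := \sum_(x <- l | perm_eq x.2 t) x.1.
Definition nrm (l : seq (K * seq int)) : seq (K * seq int) :=
  [seq (sym l t, t) | t <- undup [seq srt x.2 | x <- l]].

Lemma regroup l : \sum_(x <- l) x.1 *: Lw (srt x.2) = ev (nrm l).
Proof.
rewrite /ev /nrm big_map /=.
set T := undup _.
transitivity (\sum_(t <- T) \sum_(x <- l) (if srt x.2 == t then x.1 *: Lw t else 0)).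
  rewrite exchange_big /=; apply: eq_big_seq => x hx.
  rewrite sum_pred1_seq ?undup_uniq //.
  by rewrite /T mem_undup; apply: (map_f (fun x : K * seq int => srt x.2)).
apply: eq_big_seq => t; rewrite mem_undup => /mapP [y hy ->].
rewrite /sym /= scaler_suml [in RHS]big_mkcond /=; apply: eq_bigr => x _.
have -> : (perm_eq x.2 (srt y.2)) = (srt x.2 == srt y.2).
  apply/idP/idP => [/srtP e | /eqP e]; first by rewrite e srt_id.
  by apply/srtP; exact: (etrans e (esym (srt_id _))).
by [].
Qed.

Lemma ev_nrm l k : (forall x, x \in l -> size x.2 = k) -> Ul k (ev l - ev (nrm l)).
Proof.
move=> h; rewrite -regroup /ev -sumrB; apply: UlS => x hx; rewrite -scalerBr; apply: UlZ.
rewrite -(h _ hx); apply: perm_lemma; by rewrite perm_sym srt_perm.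
Qed.

Lemma size_nrm l k x : (forall y, y \in l -> size y.2 = k) -> x \in nrm l -> size x.2 = k.
Proof.
move=> h /mapP [t]; rewrite mem_undup => /mapP [y hy ->] -> /=.
by rewrite size_sort h.
Qed.

Lemma nrm_uniq l : uniq (nrm l).
Proof.
rewrite map_inj_in_uniq ?undup_uniq // => x y _ _ [].
by [].
Qed.

Lemma nrm_perm l x y : x \in nrm l -> y \in nrm l -> perm_eq x.2 y.2 -> x = y.
Proof.
move=> /mapP [t]; rewrite mem_undup => /mapP [u _ ->] ->.
move=> /mapP [t']; rewrite mem_undup => /mapP [u' _ ->] -> /= /srtP.
by rewrite !srt_id => ->.
Qed.

Lemma nrm_sym l x : x \in nrm l -> x.1 = sym l x.2.
Proof. by move=> /mapP [t _ ->]. Qed.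

Definition cnt (g : int -> K) (t r : seq int) : K := \sum_(y <- drv g t | perm_eq y.2 r) y.1.

Lemma perm_cons_rem (i : int) u r : perm_eq (i :: u) r = (i \in r) && perm_eq u (rem i r).
Proof.
case hi: (i \in r) => /=.
  by rewrite (permPr (perm_to_rem hi)) perm_cons.
by apply/negP => /perm_mem /(_ i); rewrite mem_head hi.
Qed.

Lemma cnt_eq g m t r : (forall i, i \in t -> i != m -> g i = 0) ->
  cnt g t r = g m * (count_mem m t)%:R * (perm_eq t (m :: r))%:R.
Proof.
elim: t r => [|i t IH] r h; first by rewrite /cnt big_nil /= mulr0 mul0r.
have h' : forall k, k \in t -> k != m -> g k = 0.
  by move=> k hk; apply: h; rewrite inE hk orbT.
rewrite /cnt /= big_cons big_map /=.
have -> : \sum_(j <- drv g t | perm_eq (i :: j.2) r) j.1 = if i \in r then cnt g t (rem i r) else 0.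
  case hi: (i \in r).
    by apply: eq_bigl => y; rewrite perm_cons_rem hi.
  by rewrite big1 // => y; rewrite perm_cons_rem hi.
case: (eqVneq i m) => [->|him].
  rewrite perm_cons add1n -nat1r.
  case hm: (m \in r).
    rewrite IH // -(permPr (perm_to_rem hm)).
    by case: (perm_eq t r) => /=; ring.
  rewrite addr0.
  case hp: (perm_eq t r) => /=; last by rewrite mulr0.
  have -> : count_mem m t = 0%N.
    by apply/eqP; rewrite -leqn0 leqNgt -has_count has_pred1 (perm_mem hp) hm.
  by rewrite addr0 !mulr1.
rewrite (h i (mem_head _ _) him) add0r.
have -> : forall X : K, (if perm_eq t r then X else X) = X by move=> X; case: ifP.
rewrite perm_cons_rem /= inE (negbTE him) /= eq_sym (negbTE him) add0n.
by case: (i \in r); rewrite ?IH // mulr0.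
Qed.

Lemma sym_Dl g l r : sym (Dl g l) r = \sum_(x <- l) x.1 * cnt g x.2 r.
Proof.
rewrite /sym /Dl big_flatten big_map; apply: eq_bigr => x _.
by rewrite big_map /cnt big_distrr.
Qed.

Lemma sym_nz g m l c0 t0 :
  uniq l -> (forall x y, x \in l -> y \in l -> perm_eq x.2 y.2 -> x = y) ->
  (c0, t0) \in l -> c0 != 0 -> m \in t0 -> g m != 0 ->
  (forall x i, x \in l -> i \in x.2 -> i != m -> g i = 0) ->
  sym (Dl g l) (rem m t0) != 0.
Proof.
move=> ul hp h0 hc0 hm hg hz; rewrite sym_Dl.
rewrite (eq_big_seq (fun x => if (c0, t0) == x then c0 * (g m * (count_mem m t0)%:R) else 0)).
  rewrite sum_pred1_seq //.
  apply: mulf_neq0 => //; apply: mulf_neq0 => //.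
  by rewrite pnatr_eq0; apply/negP => /eqP /count_memPn; rewrite hm.
move=> x hx; rewrite (cnt_eq (m := m)); last by move=> i hi hne; exact: hz hx hi hne.
rewrite -(permPr (perm_to_rem hm)).
case: (eqVneq (c0, t0) x) => [<-|hne] /=; first by rewrite perm_refl mulr1.
case hpx: (perm_eq x.2 t0); last by rewrite /= mulr0n !mulr0.
by move: hne; rewrite (hp _ _ hx h0 hpx) eqxx.
Qed.

Lemma split_step n v : U n v ->
  (exists l', [/\ (forall x, x \in l' -> size x.2 = n), (exists t, sym l' t != 0) & Ul n (v - ev l')])
  \/ Ul n v.
Proof.
move=> [l [hl ->]].
set lhi := [seq x <- l | size x.2 == n]; set llo := [seq x <- l | size x.2 != n].
have hsplit : ev l = ev lhi + ev llo.
  by rewrite /ev !big_filter [LHS](bigID (fun x : K * seq int => size x.2 == n)).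
have hlo : Ul n (ev llo).
  case: n hl @lhi @llo hsplit => [|n] hl lhi llo hsplit /=.
    rewrite /ev big1_seq // => x /andP [_]; rewrite mem_filter => /andP [hx hl'].
    by move: (hl _ hl'); rewrite leqn0 (negbTE hx).
  apply: U_ev => x; rewrite mem_filter => /andP [hx hl'].
  by move: (hl _ hl'); rewrite leq_eqVlt (negbTE hx).
have hhi : forall x, x \in lhi -> size x.2 = n.
  by move=> x; rewrite mem_filter => /andP [/eqP -> _].
case: (pselect (exists t, sym lhi t != 0)) => [ht|hn].
  left; exists lhi; split => //.
  by rewrite hsplit addrC addKr.
right; rewrite hsplit; apply: UlD' => //.
have h0 : ev (nrm lhi) = 0.
  rewrite /ev big_map big1 // => t _ /=.
  have -> : sym lhi t = 0.
    by apply/eqP; apply/negP => /negP h; apply: hn; exists t.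
  by rewrite scale0r.
by have := ev_nrm hhi; rewrite h0 subr0.
Qed.

Section Sub.
Variable S : V -> Prop.
Hypothesis HS : is_submodule rhoL rhoH S.
Hypothesis Hsel : forall ls : seq int, ls != [::] ->
  exists j m, [/\ m \in ls, gam j m != 0 & forall i, i \in ls -> i != m -> gam j i = 0].

Let S0 : S 0. Proof. by case: HS. Qed.
Let SD u v : S u -> S v -> S (u + v). Proof. by case: HS => _ h _ _ _; apply: h. Qed.
Let SZ c v : S v -> S (c *: v). Proof. by case: HS => _ _ h _ _; apply: h. Qed.
Let SH i v : S v -> S (rhoH i v). Proof. by case: HS => _ _ _ _ h; apply: h. Qed.
Let SL i v : S v -> S (rhoL i v). Proof. by case: HS => _ _ _ h _; apply: h. Qed.
Let SE j v : S v -> S (E j v).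
Proof. by move=> h; rewrite /E -scaleNr; apply: SD; [apply: SH | apply: SZ]. Qed.

Lemma Ck k : forall v l, S v -> (forall x, x \in l -> size x.2 = k) ->
  (exists t, sym l t != 0) -> Ul k (v - ev l) -> S w.
Proof.
elim: k => [|k IH] v l Sv hs [t ht] hu.
  move/subr0_eq: hu => ev_l.
  have hw : ev l = (\sum_(x <- l) x.1) *: w.
    rewrite /ev scaler_suml; apply: eq_big_seq => x hx.
    by have := hs _ hx; case: (x.2) => //.
  have hc : \sum_(x <- l) x.1 != 0.
    move: ht; rewrite /sym; case: t => [|i t].
      suff -> : \sum_(x <- l | perm_eq x.2 [::]) x.1 = \sum_(x <- l) x.1 by [].
      rewrite big_seq_cond [RHS]big_seq; apply: eq_bigl => x.
      by case hx: (x \in l) => //=; rewrite (size0nil (hs _ hx)).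
    rewrite big_seq_cond big1 ?eqxx // => x /andP [hx]; move/perm_size; rewrite (hs _ hx).
    by [].
  have -> : w = (\sum_(x <- l) x.1)^-1 *: v by rewrite ev_l hw scalerA mulVf // scale1r.
  by apply: SZ.
set nl := [seq x <- nrm l | x.1 != 0].
have hsn : forall x, x \in nl -> size x.2 = k.+1.
  by move=> x; rewrite mem_filter => /andP [_]; apply: size_nrm.
have hev : ev nl = ev (nrm l).
  rewrite /ev big_filter [LHS]big_mkcond; apply: eq_bigr => x _.
  by case: eqP => // ->; rewrite scale0r.
have hu' : U k (v - ev nl).
  have -> : v - ev nl = (v - ev l) + (ev l - ev (nrm l)) by rewrite hev addrA subrK.
  by apply: UD => //; apply: (ev_nrm hs).
have [x hx hpx] : exists2 x, x \in l & perm_eq x.2 t.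
  case: (pselect (exists2 x, x \in l & perm_eq x.2 t)) => // hn.
  move: ht; rewrite /sym big_seq_cond big1 ?eqxx // => x /andP [hx hp].
  by exfalso; apply: hn; exists x.
have hsy : sym l (srt x.2) = sym l t.
  rewrite /sym; apply: eq_bigl => z /=.
  exact: (permPr (perm_trans (srt_perm x.2) hpx)).
have hy : (sym l (srt x.2), srt x.2) \in nl.
  rewrite mem_filter; apply/andP; split; first by rewrite /= hsy.
  rewrite /nrm; apply: (map_f (fun t => (sym l t, t))).
  by rewrite mem_undup; apply: (map_f (fun x : K * seq int => srt x.2)).
set ls := flatten [seq z.2 | z <- nl].
have hls : ls != [::].
  have := hsn _ hy; case e: (srt x.2) => [//|z zs] _.
  have hz : z \in ls.
    apply/flattenP; exists (srt x.2); first by apply: (map_f (fun z : K * seq int => z.2)) hy.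
    by rewrite e mem_head.
  by apply/eqP => e'; rewrite e' in hz.
have [j [m [hm hg hzero]]] := Hsel hls.
have [s0 /mapP [x0 hx0 ->] hm0] := flattenP hm.
apply: (IH (E j v) (Dl (gam j) nl)).
- exact: SE.
- by move=> z hz; rewrite (size_Dl hsn hz).
- exists (rem m x0.2); apply: (sym_nz (c0 := x0.1)) => //.
  + by rewrite filter_uniq // nrm_uniq.
  + move=> y1 y2; rewrite !mem_filter => /andP [_ h1] /andP [_ h2]; exact: nrm_perm h1 h2.
  + by case: x0 hx0 hm0.
  + by move: hx0; rewrite mem_filter => /andP [].
  + move=> y i hy' hi hne; apply: hzero hne.
    by apply/flattenP; exists y.2 => //; apply: (map_f (fun z : K * seq int => z.2)).
- have -> : E j v - ev (Dl (gam j) nl) = E j (v - ev nl) + (E j (ev nl) - ev (Dl (gam j) nl)).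
    by rewrite (linB (linE j)) addrA subrK.
  apply: UlD'; first exact: E_U hu'.
  exact: (E_ev_Dl j hsn).
Qed.

Lemma irred n : forall v, U n v -> v != 0 -> S v -> S w.
Proof.
elim: n => [|n IH] v hv nz Sv.
  case: (split_step hv) => [[l' [hs ht hu]]|/= h]; first exact: (Ck Sv hs ht hu).
  by rewrite h eqxx in nz.
case: (split_step hv) => [[l' [hs ht hu]]|/= h]; first exact: (Ck Sv hs ht hu).
exact: (IH v h nz Sv).
Qed.
End Sub.

Definition Tgen v := exists n, U n v.
Lemma TG0 : Tgen 0. Proof. by exists 0%N; apply: U0. Qed.
Lemma TGD u v : Tgen u -> Tgen v -> Tgen (u + v).
Proof.
move=> [n hu] [m hv]; exists (maxn n m); apply: UD.
  by apply: Umon hu; apply: leq_maxl.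
by apply: Umon hv; apply: leq_maxr.
Qed.
Lemma TGZ c v : Tgen v -> Tgen (c *: v).
Proof. by move=> [n h]; exists n; apply: UZ. Qed.
Definition sgen : subm V := Subm TG0 TGD TGZ.
Local Notation QQ := (Q sgen).
Definition qL i (q : QQ) : QQ := pi sgen (rhoL i (sval q)).
Definition qH i (q : QQ) : QQ := pi sgen (rhoH i (sval q)).

Lemma repL i (q : QQ) u : rep q u -> rep (qL i q) (rhoL i u).
Proof.
apply: repF; last exact: (linB (linL i)).
by move=> x [n h]; exists n.+1; apply: UL.
Qed.
Lemma repH i (q : QQ) u : rep q u -> rep (qH i q) (rhoH i u).
Proof.
apply: repF; last exact: (linB (linH i)).
by move=> x [n h]; exists n; apply: U_H.
Qed.

Lemma rep_eqv (q q' : QQ) u u' : rep q u -> rep q' u' -> u = u' -> q = q'.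
Proof. by move=> h h' e; rewrite e in h; apply: rep_eq' h h'. Qed.

Lemma Q_module : is_Wmodule a qL qH.
Proof.
split.
- move=> i c q q'; apply: (rep_eqv (repL i (repD' (repZ' c (rep_val q)) (rep_val q')))
    (repD' (repZ' c (repL i (rep_val q))) (repL i (rep_val q')))).
  by rewrite (linD (linL i)) (linZ (linL i)).
- move=> i c q q'; apply: (rep_eqv (repH i (repD' (repZ' c (rep_val q)) (rep_val q')))
    (repD' (repZ' c (repH i (rep_val q))) (repH i (rep_val q')))).
  by rewrite (linD (linH i)) (linZ (linH i)).
- move=> i j q; apply: (rep_eqv (repD' (repL i (repL j (rep_val q))) (repN' (repL j (repL i (rep_val q)))))
    (repZ' _ (repL (i + j) (rep_val q)))).
  exact: cLL.
- move=> i j q; apply: (rep_eqv (repD' (repL i (repH j (rep_val q))) (repN' (repH j (repL i (rep_val q)))))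
    (repZ' _ (repH (i + j) (rep_val q)))).
  exact: cLH.
- move=> i j q; apply: (rep_eqv (repH i (repH j (rep_val q))) (repH j (repH i (rep_val q)))).
  by case: HM.
Qed.

Lemma generation : is_Wphi a phi rhoL rhoH w -> forall v, Tgen v.
Proof.
case=> _ _ HU.
have r0 := rep0' sgen.
have hm : forall j, qH j 0 = phi j *: (0 : QQ).
  move=> j; rewrite scaler0; apply: (rep_eqv (repH j r0) r0).
  exact: (lin0 (linH j)).
have [f [_ _ _ _ Hf]] := HU QQ qL qH 0 Q_module hm.
have pi_lin : linear (pi sgen).
  move=> c u v; apply: (rep_eqv (rep_pi sgen _) (repD' (repZ' c (rep_pi sgen u)) (rep_pi sgen v))).
  by [].
have piw : pi sgen w = 0.
  apply: (rep_eq (rep_pi sgen w) r0); rewrite subr0; exists 0%N.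
  exact: (ULw (s := [::])).
have pi_L : forall i v, pi sgen (rhoL i v) = qL i (pi sgen v).
  by move=> i v; apply: (rep_eqv (rep_pi sgen _) (repL i (rep_pi sgen v))).
have pi_H : forall i v, pi sgen (rhoH i v) = qH i (pi sgen v).
  by move=> i v; apply: (rep_eqv (rep_pi sgen _) (repH i (rep_pi sgen v))).
have z_lin : linear (fun _ : V => (0 : QQ)) by move=> c u v; rewrite scaler0 addr0.
have z_L : forall i (v : V), (0 : QQ) = qL i 0.
  move=> i v; apply: (rep_eqv r0 (repL i r0)).
  exact: (esym (lin0 (linL i))).
have z_H : forall i (v : V), (0 : QQ) = qH i 0.
  move=> i v; apply: (rep_eqv r0 (repH i r0)).
  exact: (esym (lin0 (linH i))).
move=> v.
have e1 := Hf _ pi_lin piw pi_L pi_H v.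
have e2 := Hf _ z_lin erefl z_L z_H v.
have e : pi sgen v = 0 by rewrite e1 -e2.
have h1 := rep_pi sgen v; rewrite e in h1.
have := sTD (sTZ (-1) h1) r0.
by rewrite scaleN1r opprB subr0 subrK.
Qed.

Lemma S_U (S : V -> Prop) : is_submodule rhoL rhoH S -> S w -> forall n u, U n u -> S u.
Proof.
case=> S0 SD SZ SL SH Sw n u [l [_ ->]].
have SLw : forall s, S (Lw s) by elim=> [|i s IH] //=; apply: SL.
rewrite /ev; elim: l => [|x l IH]; first by rewrite big_nil.
by rewrite big_cons; apply: SD; [apply: SZ | ].
Qed.

Definition psi k := (a + k%:~R) * phi k.
Lemma gamE j i : gam j i = - psi (i + j).
Proof. by rewrite /gam /psi (addrC j) mulNr. Qed.

Lemma ex_min_seq (ls : seq int) : ls != [::] -> exists2 m, m \in ls & forall i, i \in ls -> m <= i.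
Proof.
elim: ls => [//|x ls IH] _.
case: (eqVneq ls [::]) => [->|hne].
  by exists x; rewrite ?mem_head // => i; rewrite inE => /eqP ->.
have [m hm hmin] := IH hne.
case: (lerP x m) => hxm.
  exists x; first exact: mem_head.
  by move=> i; rewrite inE => /orP [/eqP -> //|/hmin]; apply: le_trans.
exists m; first by rewrite inE hm orbT.
by move=> i; rewrite inE => /orP [/eqP -> |/hmin //]; apply: ltW.
Qed.

Lemma ex_max_seq (ls : seq int) : ls != [::] -> exists2 m, m \in ls & forall i, i \in ls -> i <= m.
Proof.
elim: ls => [//|x ls IH] _.
case: (eqVneq ls [::]) => [->|hne].
  by exists x; rewrite ?mem_head // => i; rewrite inE => /eqP ->.
have [m hm hmax] := IH hne.
case: (lerP m x) => hxm.
  exists x; first exact: mem_head.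
  by move=> i; rewrite inE => /orP [/eqP -> //|/hmax h]; apply: le_trans h hxm.
exists m; first by rewrite inE hm orbT.
by move=> i; rewrite inE => /orP [/eqP -> |/hmax //]; apply: ltW.
Qed.

Definition HselP := forall ls : seq int, ls != [::] ->
  exists j m, [/\ m \in ls, gam j m != 0 & forall i, i \in ls -> i != m -> gam j i = 0].

Lemma sel_up jt : psi jt != 0 -> (forall k, jt < k -> psi k = 0) -> HselP.
Proof.
move=> hj hk ls hls; have [m hm hmin] := ex_min_seq hls.
exists (jt - m), m; split => //.
  by rewrite gamE addrC subrK oppr_eq0.
move=> i hi hne; rewrite gamE hk ?oppr0 //.
have : m < i by rewrite lt_neqAle eq_sym hne hmin.
by rewrite -(ltrD2r (jt - m)) addrC subrK.
Qed.

Lemma sel_down jt : psi jt != 0 -> (forall k, k < jt -> psi k = 0) -> HselP.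
Proof.
move=> hj hk ls hls; have [m hm hmax] := ex_max_seq hls.
exists (jt - m), m; split => //.
  by rewrite gamE addrC subrK oppr_eq0.
move=> i hi hne; rewrite gamE hk ?oppr0 //.
have : i < m by rewrite lt_neqAle hne hmax.
by rewrite -(ltrD2r (jt - m)) [m + _]addrC subrK.
Qed.

Lemma ex_max_int (P : int -> Prop) (b : int) : (forall y, P y -> y <= b) ->
  forall x, P x -> exists z, P z /\ forall y, P y -> y <= z.
Proof.
move=> hb.
suff h : forall n : nat, forall x, P x -> b - x <= n%:Z -> exists z, P z /\ forall y, P y -> y <= z.
  move=> x hx; apply: (h `|b - x|%N x hx); lia.
elim=> [|n IH] x hx hn.
  exists x; split => // y hy; have := hb y hy; lia.
case: (pselect (exists y, P y /\ x < y)) => [[y [hy hxy]]|hno].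
  by apply: (IH y hy); lia.
exists x; split => // y hy; rewrite leNgt; apply/negP => hxy; apply: hno; by exists y.
Qed.

Lemma ex_min_int (P : int -> Prop) (b : int) : (forall y, P y -> b <= y) ->
  forall x, P x -> exists z, P z /\ forall y, P y -> z <= y.
Proof.
move=> hb.
suff h : forall n : nat, forall x, P x -> x - b <= n%:Z -> exists z, P z /\ forall y, P y -> z <= y.
  move=> x hx; apply: (h `|x - b|%N x hx); lia.
elim=> [|n IH] x hx hn.
  exists x; split => // y hy; have := hb y hy; lia.
case: (pselect (exists y, P y /\ y < x)) => [[y [hy hxy]]|hno].
  by apply: (IH y hy); lia.
exists x; split => // y hy; rewrite leNgt; apply/negP => hxy; apply: hno; by exists y.
Qed.

Lemma phi0 k : ~ Sphi phi k -> phi k = 0.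
Proof. by rewrite /Sphi => /negP; rewrite negbK => /eqP. Qed.

Lemma psi_ne z j0 : a = - j0%:~R -> z != j0 -> Sphi phi z -> psi z != 0.
Proof.
move=> ha hz hs; rewrite /psi ha addrC -intrB mulf_neq0 //.
by rewrite intr_eq0 subr_eq0.
Qed.

Lemma not_cond j0 : Sphi phi j0 -> ~ ((forall j, Sphi phi j <-> j = j0) /\ a = - j0%:~R) ->
  a + j0%:~R = 0 -> a = - j0%:~R /\ exists j1, Sphi phi j1 /\ j1 != j0.
Proof.
move=> h0 hnc ha.
have ha' : a = - j0%:~R by apply/eqP; rewrite -addr_eq0; apply/eqP.
split => //.
case: (pselect (exists j1, Sphi phi j1 /\ j1 != j0)) => // hno; exfalso; apply: hnc; split => //.
move=> j; split => [hj|->//]; case: (eqVneq j j0) => // hne.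
by exfalso; apply: hno; exists j.
Qed.

Lemma jt_up j0 : Sphi phi j0 -> (forall j, Sphi phi j -> j <= j0) ->
  ~ ((forall j, Sphi phi j <-> j = j0) /\ a = - j0%:~R) ->
  exists jt, psi jt != 0 /\ forall k, jt < k -> psi k = 0.
Proof.
move=> h0 hmax hnc.
case: (eqVneq (a + j0%:~R) 0) => ha.
  have [ha' [j1 [h1 hne1]]] := not_cond h0 hnc ha.
  have [z [[hz hzne] hzmax]] := @ex_max_int (fun y => Sphi phi y /\ y != j0) j0
     (fun y hy => hmax y hy.1) j1 (conj h1 hne1).
  exists z; split; first exact: psi_ne ha' hzne hz.
  move=> k hk; case: (eqVneq k j0) => [->|hkne]; first by rewrite /psi ha mul0r.
  rewrite /psi phi0 ?mulr0 // => hk'; have := hzmax k (conj hk' hkne).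
  by rewrite leNgt hk.
exists j0; split; first by rewrite /psi mulf_neq0.
move=> k hk; rewrite /psi phi0 ?mulr0 // => hk'; have := hmax k hk'.
by rewrite leNgt hk.
Qed.

Lemma jt_down j0 : Sphi phi j0 -> (forall j, Sphi phi j -> j0 <= j) ->
  ~ ((forall j, Sphi phi j <-> j = j0) /\ a = - j0%:~R) ->
  exists jt, psi jt != 0 /\ forall k, k < jt -> psi k = 0.
Proof.
move=> h0 hmin hnc.
case: (eqVneq (a + j0%:~R) 0) => ha.
  have [ha' [j1 [h1 hne1]]] := not_cond h0 hnc ha.
  have [z [[hz hzne] hzmin]] := @ex_min_int (fun y => Sphi phi y /\ y != j0) j0
     (fun y hy => hmin y hy.1) j1 (conj h1 hne1).
  exists z; split; first exact: psi_ne ha' hzne hz.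
  move=> k hk; case: (eqVneq k j0) => [->|hkne]; first by rewrite /psi ha mul0r.
  rewrite /psi phi0 ?mulr0 // => hk'; have := hzmin k (conj hk' hkne).
  by rewrite leNgt hk.
exists j0; split; first by rewrite /psi mulf_neq0.
move=> k hk; rewrite /psi phi0 ?mulr0 // => hk'; have := hmin k hk'.
by rewrite leNgt hk.
Qed.

Lemma irreducible_part j0 : is_Wphi a phi rhoL rhoH w ->
  ((upper_finite phi /\ Sphi phi j0 /\ (forall j, Sphi phi j -> j <= j0))
   \/ (lower_finite phi /\ Sphi phi j0 /\ (forall j, Sphi phi j -> j0 <= j))) ->
  reducible rhoL rhoH -> ((forall j, Sphi phi j <-> j = j0) /\ a = - (j0%:~R)).
Proof.
move=> HW Hphi [S [HS [v [Sv nz]] [u nSu]]].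
case: (pselect ((forall j, Sphi phi j <-> j = j0) /\ a = - (j0%:~R))) => // hnc.
exfalso.
have Hsel : HselP.
  case: Hphi => [[_ [h0 hm]]|[_ [h0 hm]]].
    by have [jt [h1 h2]] := jt_up h0 hm hnc; apply: sel_up h1 h2.
  by have [jt [h1 h2]] := jt_down h0 hm hnc; apply: sel_down h1 h2.
have [n hn] := generation HW v.
have Sw := irred HS Hsel hn (introN eqP nz) Sv.
have [n' hn'] := generation HW u.
exact: nSu (S_U HS Sw hn').
Qed.

Lemma reducible_part j0 : is_Wphi a phi rhoL rhoH w ->
  (forall j, Sphi phi j <-> j = j0) -> a = - (j0%:~R) -> reducible rhoL rhoH.
Proof.
case=> _ _ HU hS ha.
have psi0 : forall k, (a + k%:~R) * phi k = 0.
  move=> k; case: (eqVneq k j0) => [->|hk]; first by rewrite ha addNr mul0r.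
  by rewrite phi0 ?mulr0 // => /hS /eqP; rewrite (negbTE hk).
pose M1 := (Cx R)^o.
pose mL1 := fun (i : int) (_ : M1) => (0 : M1).
pose mH1 := fun (j : int) (x : M1) => phi j *: x.
have mod1 : is_Wmodule a mL1 mH1.
  split.
  - by move=> i c u v; rewrite /mL1 scaler0 addr0.
  - by move=> i c u v; rewrite /mH1 scalerDr !scalerA mulrC.
  - by move=> i j v; rewrite /mL1 subrr scaler0.
  - by move=> i j v; rewrite /mL1 /mH1 scaler0 subrr scalerA (addrC j) psi0 scale0r.
  - by move=> i j v; rewrite /mH1 !scalerA mulrC.
have [f1 [lf1 f1w f1L f1H _]] := HU M1 mL1 mH1 1 mod1 (fun j => erefl).
pose M2 := int -> (Cx R)^o.
pose mL2 := fun (i : int) (f : M2) => (fun n : int => ((n - i)%:~R : Cx R) *: f (n - i)) : M2.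
pose mH2 := fun (j : int) (f : M2) => phi j *: f.
have mod2 : is_Wmodule a mL2 mH2.
  split.
  - move=> i c u v; apply/funext => n; rewrite /mL2 /=.
    by rewrite !addrfctE !scalrfctE /= scalerDr !scalerA mulrC.
  - by move=> i c u v; rewrite /mH2 scalerDr !scalerA mulrC.
  - move=> i j f; apply/funext => n; rewrite /mL2 /=.
    have e1 : n - i - j = n - (i + j) by lia.
    have e2 : n - j - i = n - (i + j) by lia.
    rewrite !addrfctE !opprfctE !scalrfctE /= e1 e2 !scalerA -scalerBl; congr (_ *: _).
    rewrite !intrB !intrD; ring.
  - move=> i j f; apply/funext => n; rewrite /mL2 /mH2 /=.
    rewrite !addrfctE !opprfctE !scalrfctE /= [RHS]scalerA (addrC j) psi0 scale0r.
    by rewrite !scalerA mulrC subrr.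
  - by move=> i j v; rewrite /mH2 !scalerA mulrC.
pose m2 : M2 := fun n : int => if n == 1 then (1 : Cx R) else 0.
have [f2 [lf2 f2w f2L f2H _]] := HU M2 mL2 mH2 m2 mod2 (fun j => erefl).
exists (fun v => f1 v = 0); split.
- split.
  + exact: lin0 lf1.
  + by move=> u v hu hv; rewrite (linD lf1) hu hv addr0.
  + by move=> c v hv; rewrite (linZ lf1) hv scaler0.
  + by move=> i v hv; rewrite f1L.
  + by move=> i v hv; rewrite f1H hv /mH1 scaler0.
- exists (rhoL 1 w); split; first by rewrite f1L.
  move=> e; have := f2L 1 w; rewrite e (lin0 lf2) f2w => /(congr1 (fun f : M2 => f 2)).
  rewrite /mL2 /m2 /=.
  have -> : (2 - 1 : int) = 1 by [].
  move=> h; have : (0 : Cx R) = 1.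
    by rewrite -[LHS]/((0 : M2) 2) h /= scale1r.
  by move/eqP; rewrite eq_sym oner_eq0.
- by exists w; rewrite f1w => /eqP; rewrite oner_eq0.
Qed.
End W.

Unset Implicit Arguments.

Theorem proposition4p7 (R : realType) (a : Cx R) (phi : int -> Cx R)
    (j0 : int)
    (Hphi : (upper_finite phi /\ Sphi phi j0 /\ (forall j, Sphi phi j -> j <= j0))
            \/ (lower_finite phi /\ Sphi phi j0 /\ (forall j, Sphi phi j -> j0 <= j)))
    (V : lmodType (Cx R)) (rhoL rhoH : int -> V -> V) (w : V)
    (HW : is_Wphi a phi rhoL rhoH w) :
  reducible rhoL rhoH <->
  ((forall j, Sphi phi j <-> j = j0) /\ a = - (j0%:~R)).
Proof.
have [HM Hw _] := HW.
split.
  exact: (irreducible_part HM Hw HW Hphi).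
by case=> hS ha; exact: (reducible_part HW hS ha).
Qed.
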